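(* Let $\mathcal G$ encode a fine mixed subdivision of $n\Delta^{d-1}$ with $n\ge2$, and let $t$ be a lattice point of $(n-2)\Delta^{d-1}$. Then for every $\bar j\in[\bar d]$, the augmented degree of $\bar j$ in the tree-linkage covector $\tilde{\mathbb G}(t)$ equals $t_{\bar j}+2$; i.e. the augmented degree vector equals $t+2\cdot\mathbf 1$.
   Context: Fix positive integers $n,d$; $K_{n,d}$ is the complete bipartite graph with left vertices $[n]$ and right vertices $[\bar d]=\{\bar1,\dots,\bar d\}$; graphs are identified with edge sets; $RD$ denotes the vector of right-vertex degrees, $\mathbf 1$ the all-ones vector in $\mathbb Z^{[\bar d]}$, $e_{\bar j}$ a unit vector; lattice points of $k\Delta^{d-1}$ are vectors in $\mathbb Z_{\ge0}^{[\bar d]}$ with sum $k$. Two acyclic subgraphs are compatible if whenever both contain a perfect matching between the same $I\subseteq[n]$, $\bar J\subseteq[\bar d]$, these matchings coincide. A collection $\mathcal G$ of subgraphs of $K_{n,d}$ encodes a fine mixed subdivision of $n\Delta^{d-1}$ if: every $G\in\mathcal G$ is a spanning tree of $K_{n,d}$; (tree linkage) for each $G\in\mathcal G$ and each edge $e\in G$ not incident to a leaf, there are $G'\in\mathcal G$, $G'\neq G$, and $e'\in G'$ with $G\setminus e=G'\setminus e'$; (compatibility) any two trees of $\mathcal G$ are compatible. It is known that then for each lattice point $u$ of $(n-1)\Delta^{d-1}$ there is exactly one tree $\mathbb T(u)\in\mathcal G$ with $RD(\mathbb T(u))=u+\mathbf 1$, and these are all the trees of $\mathcal G$. For a lattice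 point $t$ of $(n-2)\Delta^{d-1}$, the tree-linkage graph $\mathbb G(t)$ is the graph on vertex set $[\bar d]$ in which $\bar j\neq\bar j'$ are adjacent iff $\mathbb T(t+e_{\bar j})\setminus\mathbb T(t+e_{\bar j'})=\{(i,\bar j)\}$ and $\mathbb T(t+e_{\bar j'})\setminus\mathbb T(t+e_{\bar j})=\{(i',\bar j')\}$ for some $i,i'\in[n]$ (with near labels $i$ at $\bar j$ and $i'$ at $\bar j'$). Let $T_t=\bigcap_{\bar j\in[\bar d]}\mathbb T(t+e_{\bar j})$. The tree-linkage covector $\tilde{\mathbb G}(t)$ is $\mathbb G(t)$ with each vertex $\bar j$ additionally labeled by all $i\in[n]$ with $(i,\bar j)\in T_t$. The augmented degree of $\bar j$ is its degree in $\mathbb G(t)$ plus the number of vertex labels at $\bar j$, i.e. $\deg_{\mathbb G(t)}(\bar j)+\#\{i:(i,\bar j)\in T_t\}$. *)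

(* Defs.v *)
From mathcomp Require Import all_boot.
Set Implicit Arguments. Unset Strict Implicit. Unset Printing Implicit Defensive.

Section KGraph.
Variables n d : nat.

(* Edges of K_{n,d}: pairs (i, jbar) with i in [n] (as 'I_n) and jbar in [dbar] (as 'I_d). *)
Definition edge := ('I_n * 'I_d)%type.
Definition vert := ('I_n + 'I_d)%type.

Definition adj (G : {set edge}) : rel vert :=
  fun u v => match u, v with
             | inl i, inr j => (i, j) \in G
             | inr j, inl i => (i, j) \in G
             | _, _ => false
             end.

Definition connectedG (G : {set edge}) : Prop :=
  forall u v : vert, connect (adj G) u v.

(* acyclic: no edge lies on a cycle, i.e. removing any edge disconnects its endpoints *)
Definition acyclic (G : {set edge}) : Prop :=
  forall e, e \in G -> ~~ connect (adj (G :\ e)) (inl e.1) (inr e.2).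

Definition spanning_tree (G : {set edge}) : Prop := connectedG G /\ acyclic G.

Definition degG (G : {set edge}) (v : vert) : nat := #|[set w | adj G v w]|.

Definition incident_to_leaf (G : {set edge}) (e : edge) : bool :=
  (degG G (inl e.1) == 1) || (degG G (inr e.2) == 1).

Definition perfect_matching (M : {set edge}) (I : {set 'I_n}) (J : {set 'I_d}) : bool :=
  [&& [forall e in M, (e.1 \in I) && (e.2 \in J)],
      [forall i in I, #|[set e in M | e.1 == i]| == 1] &
      [forall j in J, #|[set e in M | e.2 == j]| == 1]].

Definition compatible (G1 G2 : {set edge}) : Prop :=
  forall (I : {set 'I_n}) (J : {set 'I_d}) (M1 M2 : {set edge}),
    M1 \subset G1 -> M2 \subset G2 ->
    perfect_matching M1 I J -> perfect_matching M2 I J -> M1 = M2.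

Definition encodes_fms (GG : {set {set edge}}) : Prop :=
  [/\ (forall G, G \in GG -> spanning_tree G),
      (forall G e, G \in GG -> e \in G -> ~~ incident_to_leaf G e ->
         exists G', exists e', [/\ G' \in GG, G' != G, e' \in G' & G :\ e = G' :\ e'])
    & (forall G1 G2, G1 \in GG -> G2 \in GG -> compatible G1 G2)].

Definition RD (G : {set edge}) (j : 'I_d) : nat := #|[set i : 'I_n | (i, j) \in G]|.

(* Tree-linkage graph G(t), given the trees T j = TT(t + e_j) *)
Definition linked (T : 'I_d -> {set edge}) (j j' : 'I_d) : bool :=
  [&& j != j',
      [exists i : 'I_n, T j :\: T j' == [set (i, j)]] &
      [exists i' : 'I_n, T j' :\: T j == [set (i', j')]]].

Definition Tt (T : 'I_d -> {set edge}) : {set edge} := \bigcap_(j : 'I_d) T j.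

Definition augmented_degree (T : 'I_d -> {set edge}) (j : 'I_d) : nat :=
  #|[set j' | linked T j j']| + #|[set i : 'I_n | (i, j) \in Tt T]|.

End KGraph.

(* Main.v *)
Require Import Defs.
From mathcomp Require Import all_boot zify.
Set Implicit Arguments. Unset Strict Implicit. Unset Printing Implicit Defensive.

Section Aux.
Variables n d : nat.
Local Notation E := (edge n d).
Local Notation V := (vert n d).

Definition H (T T' : {set E}) : rel V := fun u w =>
  match u, w with
  | inl x, inr y => (x, y) \in T
  | inr y, inl x => (x, y) \in T'
  | _, _ => false
  end.

Lemma next_next_neq (c : seq V) z : uniq c -> 2 < size c -> z \in c ->
  next c (next c z) != z.
Proof.
move=> Uc Sc zc; case: (rot_to zc) => i s' Hr.
rewrite -!(next_rot i Uc) Hr.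
have Ur : uniq (z :: s') by rewrite -Hr rot_uniq.
have Sr : 2 < size (z :: s') by rewrite -Hr size_rot.
case: s' Ur Sr Hr => [|a [|b r]] //= Ur _ _.
move: Ur; rewrite !inE !negb_or => /and4P[/and3P[za zb _] /andP[ab _] _ _].
by rewrite eqxx (eq_sym a z) (negbTE za) eqxx eq_sym.
Qed.


Lemma cycle_incompat (T T' : {set E}) (c : seq V) :
  uniq c -> cycle (H T T') c -> 2 < size c -> ~ compatible T T'.
Proof.
move=> Uc cyc Sc comp.
have nextinj : injective (next c) := can_inj (prev_next Uc).
set I := [set x | inl x \in c].
set J := [set y | inr y \in c].
set M1 := [set e : E | (inl e.1 \in c) && (next c (inl e.1) == inr e.2)].
set M2 := [set e : E | (inr e.2 \in c) && (next c (inr e.2) == inl e.1)].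
have nL x : inl x \in c -> exists y, next c (inl x) = inr y.
  move=> xc; have := next_cycle cyc xc.
  by case: (next c (inl x)) => [x'|y] //= _; exists y.
have nR y : inr y \in c -> exists x, next c (inr y) = inl x.
  move=> yc; have := next_cycle cyc yc.
  by case: (next c (inr y)) => [x|y'] //= _; exists x.
have pR y : inr y \in c -> exists x, next c (inl x) = inr y /\ inl x \in c.
  move=> yc; have := prev_cycle cyc yc.
  case E1: (prev c (inr y)) => [x|y'] //= _; exists x.
  by rewrite -E1 next_prev // mem_prev.
have pL x : inl x \in c -> exists y, next c (inr y) = inl x /\ inr y \in c.
  move=> xc; have := prev_cycle cyc xc.
  case E1: (prev c (inl x)) => [x'|y] //= _; exists y.
  by rewrite -E1 next_prev // mem_prev.
have pm1 : perfect_matching M1 I J.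
  apply/and3P; split.
  - apply/forall_inP => -[x y]; rewrite !inE /= => /andP[xc /eqP ny].
    by rewrite xc -ny mem_next.
  - apply/forall_inP => x; rewrite inE => xc; have [y ny] := nL x xc.
    apply/cards1P; exists (x, y).
    apply/setP => -[x' y']; rewrite !inE /= xpair_eqE.
    case: (x' =P x) => [-> | _]; last by rewrite andbF.
    by rewrite xc ny andbT /= inj_eq //; exact: inr_inj.
  - apply/forall_inP => y; rewrite inE => yc; have [x [nx xc]] := pR y yc.
    apply/cards1P; exists (x, y).
    apply/setP => -[x' y']; rewrite !inE /= xpair_eqE.
    case: (y' =P y) => [-> | _]; last by rewrite !andbF.
    rewrite !andbT -nx (inj_eq nextinj) (inj_eq (@inl_inj _ _)).
    by case: (x' =P x) => [->|]; rewrite ?xc ?andbF.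
have pm2 : perfect_matching M2 I J.
  apply/and3P; split.
  - apply/forall_inP => -[x y]; rewrite !inE /= => /andP[yc /eqP ny].
    by rewrite -ny mem_next yc.
  - apply/forall_inP => x; rewrite inE => xc; have [y [ny yc]] := pL x xc.
    apply/cards1P; exists (x, y).
    apply/setP => -[x' y']; rewrite !inE /= xpair_eqE.
    case: (x' =P x) => [-> | _]; last by rewrite andbF.
    rewrite !andbT -ny (inj_eq nextinj) (inj_eq (@inr_inj _ _)) eq_sym.
    by case: (y =P y') => [<-|]; rewrite ?yc ?andbF.
  - apply/forall_inP => y; rewrite inE => yc; have [x nx] := nR y yc.
    apply/cards1P; exists (x, y).
    apply/setP => -[x' y']; rewrite !inE /= xpair_eqE.
    case: (y' =P y) => [-> | _]; last by rewrite !andbF.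
    by rewrite yc nx andbT /= inj_eq ?andbT //; exact: inl_inj.
have s1 : M1 \subset T.
  apply/subsetP => -[x y]; rewrite inE /= => /andP[xc /eqP ny].
  by have := next_cycle cyc xc; rewrite ny.
have s2 : M2 \subset T'.
  apply/subsetP => -[x y]; rewrite inE /= => /andP[yc /eqP ny].
  by have := next_cycle cyc yc; rewrite ny.
have eqM := comp I J M1 M2 s1 s2 pm1 pm2.
have [x xc] : exists x, inl x \in c.
  have [w wc] : exists w, w \in c.
    by clear -Sc; case: c Sc => [|w c'] //= _; exists w; rewrite inE eqxx.
  case: w wc => [x|y] wc; first by exists x.
  by have [x nx] := nR y wc; exists x; rewrite -nx mem_next.
have [y ny] := nL x xc.
have : (x, y) \in M2 by rewrite -eqM inE /= xc ny eqxx.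
rewrite inE /= => /andP[_ /eqP nny].
by have := next_next_neq Uc Sc xc; rewrite ny nny eqxx.
Qed.


Lemma H_irr T T' u : H T T' u u = false.
Proof. by case: u. Qed.

Lemma K_common (T T' : {set E}) : compatible T T' ->
  forall u w, H T T' u w -> connect (H T T') w u -> H T T' w u.
Proof.
move=> comp u w huw /connectP[p pth lst].
move: lst; case: (shortenP pth) => p' pth' U' _ lst.
case: p' pth' U' lst => [|v [|v2 p2]] /=.
- by move=> _ _ eu; move: huw; rewrite eu H_irr.
- by move=> /andP[hwv _] _ ->.
move=> pth' U' lst; exfalso.
apply: (cycle_incompat (T:=T) (T':=T') (c := w :: v :: v2 :: p2) U') => //.
rewrite /cycle rcons_path; apply/andP; split; first exact: pth'.
by rewrite /= -lst.
Qed.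


Lemma closed_connect (e : rel V) (X : {set V}) v0 w :
  connect e v0 w -> v0 \in X -> (forall u w, u \in X -> e u w -> w \in X) -> w \in X.
Proof.
move=> /connectP[p pth ->] v0X cl.
elim: p v0 v0X pth => //= v p IH v0 v0X /andP[a pth].
exact: IH (cl _ _ v0X a) pth.
Qed.

Lemma sink_exists (e : rel V) (v0 : V) :
  exists v, forall u w, connect e v u -> connect e v w -> connect e u w.
Proof.
case: (arg_minnP (fun v => #|[set w | connect e v w]|) (P := xpredT) (i0 := v0) isT).
move=> v _ minv; exists v => u w vu vw.
have sub : [set x | connect e u x] \subset [set x | connect e v x].
  by apply/subsetP => x; rewrite !inE; apply: connect_trans.
have : [set x | connect e u x] == [set x | connect e v x].
  by rewrite eqEcard sub minv.
by move/eqP/setP/(_ w); rewrite !inE vw.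
Qed.

Lemma card_sub_eq (A B : {set 'I_n}) : A \subset B -> #|B| <= #|A| -> A = B.
Proof. by move=> s c; apply/eqP; rewrite eqEcard s c. Qed.

Lemma U_eq (T T' : {set E}) (v0 : V) : connectedG T -> compatible T T' ->
  (forall y, RD T y <= RD T' y) -> T = T'.
Proof.
move=> conn comp rd.
have [v P] := sink_exists (H T T') v0.
have KK := K_common comp.
have Nsub y : connect (H T T') v (inr y) ->
    [set x | (x, y) \in T'] \subset [set x | (x, y) \in T].
  move=> vy; apply/subsetP => x; rewrite !inE => xyT'.
  have hyx : H T T' (inr y) (inl x) by [].
  have vx : connect (H T T') v (inl x) by apply: connect_trans vy (connect1 hyx).
  exact: (KK _ _ hyx (P _ _ vx vy)).
have all w : connect (H T T') v w.
  have := @closed_connect (adj T) [set w | connect (H T T') v w] v w (conn v w).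
  rewrite !inE; apply => //; move=> u w'; rewrite !inE => vu.
  case: u vu => [x|y] vu; case: w' => [x'|y'] //= ed.
    by apply: connect_trans vu (connect1 _).
  have := card_sub_eq (Nsub _ vu) (rd y).
  move/setP/(_ x'); rewrite !inE ed => xy.
  by apply: connect_trans vu (connect1 _); rewrite /= xy.
apply/setP => -[x y]; apply/idP/idP => ed.
  have hxy : H T T' (inl x) (inr y) by [].
  exact: (KK _ _ hxy (P _ _ (all _) (all _))).
have hyx : H T T' (inr y) (inl x) by [].
exact: (KK _ _ hyx (P _ _ (all _) (all _))).
Qed.


Lemma L_leaf (T T' : {set E}) i j : connectedG T -> connectedG T' -> compatible T T' ->
  (i, j) \in T -> (forall y, (i, y) \in T -> y = j) ->
  (forall y, y != j -> RD T y <= RD T' y) -> RD T j <= (RD T' j).+1 ->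
  (i, j) \in T'.
Proof.
move=> conn conn' comp ijT leaf rd rdj; apply/idPn => nij.
have [v P] := sink_exists (H T T') (inl i).
have KK := K_common comp.
set X := [set w | connect (H T T') v w].
have Nsub y : inr y \in X ->
    [set x | (x, y) \in T'] \subset [set x | (x, y) \in T].
  rewrite inE => vy; apply/subsetP => x; rewrite !inE => xyT'.
  have hyx : H T T' (inr y) (inl x) by [].
  have vx : connect (H T T') v (inl x) by apply: connect_trans vy (connect1 hyx).
  exact: (KK _ _ hyx (P _ _ vx vy)).
have Neq y : inr y \in X -> y != j -> forall x, (x, y) \in T -> (x, y) \in T'.
  move=> yX yj x xy.
  have := card_sub_eq (Nsub _ yX) (rd y yj).
  by move/setP/(_ x); rewrite !inE xy.
have arcX u w : u \in X -> H T T' u w -> w \in X.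
  by rewrite !inE => vu huw; apply: connect_trans vu (connect1 huw).
have iX : inl i \notin X.
  apply/negP => iX.
  have jX : inr j \in X by apply: arcX iX _; rewrite /= ijT.
  move: iX jX; rewrite !inE => iX jX.
  have hij : H T T' (inl i) (inr j) by [].
  by move: (KK _ _ hij (P _ _ jX iX)); rewrite /= (negbTE nij).
have jX : inr j \in X.
  apply/idPn => jX; case/negP: iX.
  apply: (@closed_connect (adj T) X v (inl i) (conn _ _)); first by rewrite inE connect0.
  move=> u w uX; case: u uX => [x|y] uX; case: w => [x'|y'] //= ed.
    by apply: (arcX _ _ uX).
  apply: (arcX _ _ uX); rewrite /= Neq //.
  by apply: contraNneq jX => <-.
set X' := inl i |: X.
have allX' w : w \in X'.
  apply: (@closed_connect (adj T) X' (inl i) w (conn _ _)); first by rewrite !inE eqxx.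
  move=> u w'; rewrite in_setU1 => /orP[/eqP->|uX].
    by case: w' => [x'|y'] //= ed; rewrite in_setU1 (leaf _ ed) jX orbT.
  case: u uX => [x|y] uX; case: w' => [x'|y'] //= ed.
    by rewrite in_setU1 (arcX _ _ uX _) ?orbT.
  rewrite in_setU1.
  case: (x' =P i) => [->|xi]; first by rewrite eqxx.
  apply/orP; right; apply: (arcX _ _ uX); rewrite /=.
  case: (y =P j) => [yj|/eqP yj]; last by rewrite Neq.
  subst y.
  have s1 : i |: [set x | (x, j) \in T'] \subset [set x | (x, j) \in T].
    apply/subsetP => x; rewrite in_setU1 => /orP[/eqP->|]; first by rewrite inE ijT.
    exact: (subsetP (Nsub _ uX)).
  have c1 : #|[set x | (x, j) \in T]| <= #|i |: [set x | (x, j) \in T']|.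
    rewrite cardsU1 inE nij /=; exact: rdj.
  have := card_sub_eq s1 c1; move/setP/(_ x'); rewrite in_setU1 !inE ed.
  by case/orP => [/eqP|].
have [w ad] : exists w, adj T' (inl i) w.
  have /connectP[p pth lst] := conn' (inl i) (inr j).
  by case: p pth lst => [|w p] //= /andP[a _] _; exists w.
case: w ad => [x|y] //= ad.
have := allX' (inr y); rewrite in_setU1 /= => yX.
by case/negP: iX; apply: (arcX _ _ yX).
Qed.


Lemma swap_eq (A B : {set E}) e1 e2 : A :\: B = [set e1] -> B :\: A = [set e2] ->
  [/\ B = e2 |: (A :\ e1), e2 \notin A, e1 \in A & e1 \notin B].
Proof.
move=> h1 h2.
have : e1 \in A :\: B by rewrite h1 set11.
have : e2 \in B :\: A by rewrite h2 set11.
rewrite !inE => /andP[e2A e2B] /andP[e1B e1A].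
split => //; apply/setP => e; rewrite in_setU1 in_setD1.
move: h1 h2 => /setP/(_ e) h1e /setP/(_ e) h2e; move: h1e h2e; rewrite !inE.
case: (e =P e1) => [->|_]; first by rewrite (negbTE e1B) e1A; case: (e1 =P e2) => [h|]; [rewrite h in e1B; rewrite e2B in e1B|].
case: (e =P e2) => [->|_]; first by rewrite e2B.
by case: (e \in A); case: (e \in B).
Qed.


Lemma adj_sym (G : {set E}) : symmetric (adj G).
Proof. by case=> [x|y] [x'|y']. Qed.

Lemma adj_U1 (G : {set E}) e u w : adj (e |: G) u w ->
  adj G u w \/ ((u = inl e.1 /\ w = inr e.2) \/ (u = inr e.2 /\ w = inl e.1)).
Proof.
case: e => x0 y0 /=.
case: u => [x|y]; case: w => [x'|y'] //=; rewrite in_setU1 => /orP[/eqP[-> ->]|h]; auto.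
Qed.

Lemma adj_D1 (G : {set E}) e u w : adj G u w ->
  adj (G :\ e) u w \/ ((u = inl e.1 /\ w = inr e.2) \/ (u = inr e.2 /\ w = inl e.1)).
Proof.
case: e => x0 y0 /=.
case: u => [x|y]; case: w => [x'|y'] //= h; rewrite in_setD1 h andbT;
  case: eqP => [[-> ->]|]; auto.
Qed.

Lemma sub_H (F T T' : {set E}) : F \subset T -> F \subset T' ->
  forall u w, connect (adj F) u w -> connect (H T T') u w.
Proof.
move=> s s' u w; apply: connect_sub => {u w} u w.
case: u => [x|y]; case: w => [x'|y'] //= h; apply: connect1 => /=.
  exact: (subsetP s).
exact: (subsetP s').
Qed.

Lemma side (Tj Tk : {set E}) i j a k :
  connectedG Tj -> connectedG Tk -> compatible Tj Tk ->
  (i, j) \in Tj -> ~~ connect (adj (Tj :\ (i, j))) (inl i) (inr j) ->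
  Tk = (a, k) |: (Tj :\ (i, j)) -> (a, k) \notin Tj ->
  connect (adj (Tj :\ (i, j))) (inl i) (inr k) /\
  connect (adj (Tj :\ (i, j))) (inr j) (inl a).
Proof.
move=> connj connk comp ijT acy Tkeq akT.
set F := Tj :\ (i, j).
have symF : connect_sym (adj F) := sym_connect_sym (@adj_sym F).
have sFj : F \subset Tj by apply: subD1set.
have sFk : F \subset Tk by rewrite Tkeq subsetUr.
have f2 u : connect (adj F) (inl i) u || connect (adj F) (inr j) u.
  have := @closed_connect (adj Tj) [set u | connect (adj F) (inl i) u || connect (adj F) (inr j) u] (inl i) u (connj _ _).
  rewrite !inE connect0; apply => // u' w' uX ad.
  move: uX; rewrite !inE.
  case: (adj_D1 (i, j) ad) => [adF|[[-> ->]|[-> ->]]] /=; rewrite ?connect0 ?orbT //.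
  by case/orP=> h; rewrite (connect_trans h (connect1 adF)) ?orbT.
have noji : ~~ connect (H Tj Tk) (inr j) (inl i).
  apply/negP => c; have := K_common comp (_ : H Tj Tk (inl i) (inr j)) c.
  rewrite /= ijT Tkeq in_setU1 in_setD1 eqxx /= orbF => /(_ isT) /eqP hh.
  by move: akT; rewrite -hh ijT.
have clos (X : {set V}) : (inl a \in X) -> (inr k \in X) ->
    (forall u w, u \in X -> adj F u w -> w \in X) ->
    forall w, w \in X.
  move=> aX kX cl w.
  apply: (@closed_connect (adj Tk) X (inl a) w (connk _ _)) => // u w' uX ad.
  move: ad; rewrite Tkeq => /adj_U1 [adF|[[_ ->]|[_ ->]]] //; exact: cl uX adF.
have C1cl u w : u \in [set x | connect (adj F) (inl i) x] -> adj F u w ->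
    w \in [set x | connect (adj F) (inl i) x].
  by rewrite !inE => h ad; apply: connect_trans h (connect1 ad).
have C2cl u w : u \in [set x | connect (adj F) (inr j) x] -> adj F u w ->
    w \in [set x | connect (adj F) (inr j) x].
  by rewrite !inE => h ad; apply: connect_trans h (connect1 ad).
have := f2 (inr k); have := f2 (inl a).
case/orP => ha; case/orP => hk.
- have := clos _ _ _ C1cl (inr j); rewrite !inE => /(_ ha hk) h.
  by rewrite h in acy.
- case/negP: noji.
  apply: connect_trans (sub_H sFj sFk hk) _.
  apply: connect_trans (connect1 (_ : H Tj Tk (inr k) (inl a))) _.
    by rewrite /= Tkeq setU11.
  by apply: (sub_H sFj sFk); rewrite symF.
- by split.
- have := clos _ _ _ C2cl (inl i); rewrite !inE => /(_ ha hk) h.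
  by rewrite symF h in acy.
Qed.


Lemma I_inj (Tj Tk Tk' : {set E}) i j a k b k' :
  connectedG Tj -> acyclic Tj -> connectedG Tk -> connectedG Tk' ->
  compatible Tj Tk -> compatible Tj Tk' -> compatible Tk Tk' ->
  Tj :\: Tk = [set (i, j)] -> Tk :\: Tj = [set (a, k)] ->
  Tj :\: Tk' = [set (i, j)] -> Tk' :\: Tj = [set (b, k')] -> k = k'.
Proof.
move=> cj acj ck ck' cjk cjk' ckk' h1 h2 h3 h4.
have [Tkeq akT ijT _] := swap_eq h1 h2.
have [Tk'eq bkT _ _] := swap_eq h3 h4.
have acy := acj _ ijT; rewrite /= in acy.
have [hk ha] := side cj ck cjk ijT acy Tkeq akT.
have [hk' hb] := side cj ck' cjk' ijT acy Tk'eq bkT.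
set F := Tj :\ (i, j) in hk ha hk' hb Tkeq Tk'eq.
have symF : connect_sym (adj F) := sym_connect_sym (@adj_sym F).
have sFk : F \subset Tk by rewrite Tkeq subsetUr.
have sFk' : F \subset Tk' by rewrite Tk'eq subsetUr.
have c : connect (H Tk Tk') (inr k) (inl a).
  eapply connect_trans.
    apply: (sub_H sFk sFk' (_ : connect (adj F) (inr k) (inl i))).
    by rewrite symF.
  eapply connect_trans; first exact: (sub_H sFk sFk' hk').
  apply: (@connect_trans _ _ (inl b)); first by apply: connect1; rewrite /= Tk'eq setU11.
  eapply connect_trans.
    apply: (sub_H sFk sFk' (_ : connect (adj F) (inl b) (inr j))).
    by rewrite symF.
  exact: (sub_H sFk sFk' ha).
have := K_common ckk' (_ : H Tk Tk' (inl a) (inr k)) c.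
rewrite /= {1}Tkeq setU11 Tk'eq in_setU1 => /(_ isT) /orP[/eqP[_ ->] //|].
rewrite in_setD1 => /andP[_ h]; by rewrite h in akT.
Qed.


Lemma degR (G : {set E}) y : degG G (inr y) = RD G y.
Proof.
rewrite /degG /RD -(card_imset _ (@inl_inj 'I_n 'I_d)); apply: eq_card => w.
case: w => [x|y']; rewrite !inE /=.
  by rewrite (mem_imset _ _ (@inl_inj 'I_n 'I_d)) inE.
by apply/esym/imsetP => -[x _].
Qed.

Lemma degL1 (G : {set E}) i j : degG G (inl i) == 1 -> (i, j) \in G ->
  forall y, (i, y) \in G -> y = j.
Proof.
move=> /cards1P[w0 hw] ij y iy.
have h1 : inr j \in [set w | adj G (inl i) w] by rewrite inE.
have h2 : inr y \in [set w | adj G (inl i) w] by rewrite inE.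
by move: h1 h2; rewrite hw !inE => /eqP<- /eqP[].
Qed.

Lemma NS_U1 (G : {set E}) x0 y0 y :
  #|[set x | (x, y) \in (x0, y0) |: G]| <= #|[set x | (x, y) \in G]| + (y0 == y).
Proof.
have -> : [set x | (x, y) \in (x0, y0) |: G] =
  [set x | (x, y) \in G] :|: [set x | (x == x0) && (y0 == y)].
  by apply/setP => x; rewrite !inE xpair_eqE [y == y0]eq_sym orbC.
apply: leq_trans (leq_card_setU _ _) _; rewrite leq_add2l.
case: eqP => _; last by rewrite (_ : [set x | _] = set0) ?cards0 //; apply/setP => x; rewrite !inE andbF.
by rewrite (_ : [set x | _] = [set x0]) ?cards1 //; apply/setP => x; rewrite !inE andbT.
Qed.

Lemma NS_D1 (G : {set E}) x0 y0 y : (x0, y0) \in G ->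
  #|[set x | (x, y) \in G :\ (x0, y0)]| + (y0 == y) = #|[set x | (x, y) \in G]|.
Proof.
move=> h; case: (y0 =P y) => [<-|ny]; last first.
  rewrite addn0; apply: eq_card => x; rewrite !inE xpair_eqE.
  by rewrite [y == y0]eq_sym; case: (y0 =P y) ny => // _ _; rewrite andbF.
have -> : [set x | (x, y0) \in G :\ (x0, y0)] = [set x | (x, y0) \in G] :\ x0.
  by apply/setP => x; rewrite !inE xpair_eqE eqxx andbT.
by rewrite [in RHS](cardsD1 x0) inE h addnC.
Qed.

Lemma swap_diff (A : {set E}) e1 e2 : e1 \in A -> e2 \notin A ->
  A :\: (e2 |: (A :\ e1)) = [set e1] /\ (e2 |: (A :\ e1)) :\: A = [set e2].
Proof.
move=> e1A e2A; split; apply/setP => e; rewrite !inE.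
  case: (e =P e1) => [->|_]; first by rewrite e1A andbT; case: eqP => // h; rewrite -h e1A in e2A.
  by case: (e =P e2) => [->|]; rewrite ?(negbTE e2A) ?andbF // andNb.
case: (e =P e2) => [->|_]; first by rewrite (negbTE e2A).
by case: (e \in A); rewrite ?andbF.
Qed.

End Aux.

Theorem mainTheorem14 (n d : nat) (GG : {set {set edge n d}})
  (t : 'I_d -> nat) (T : 'I_d -> {set edge n d}) :
  0 < d -> 2 <= n ->
  encodes_fms GG ->
  \sum_(j < d) t j = n - 2 ->
  (* T j is the (unique) tree TT(t + e_j) of GG, i.e. RD(T j) = t + e_j + 1 *)
  (forall j, T j \in GG /\ (forall k, RD (T j) k = t k + (j == k) + 1)) ->
  forall j : 'I_d, augmented_degree T j = t j + 2.
Proof.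
move=> d0 n2 [trees link comp] _ hT j.
have n0 : 0 < n by apply: leq_trans n2.
pose i0 : 'I_n := Ordinal n0.
have TG k : T k \in GG := (hT k).1.
have RDk k y : RD (T k) y = t y + (k == y) + 1 := (hT k).2 y.
have sp k : spanning_tree (T k) := trees _ (TG k).
have cp k k' : compatible (T k) (T k') := comp _ _ (TG k) (TG k').
set A := [set i | (i, j) \in T j].
set Z := [set i | (i, j) \in Tt T].
set Ls := [set k | linked T j k].
pose f k := odflt i0 [pick i | (i, j) \in T j :\: T k].
have cardA : #|A| = t j + 2 by have := RDk j j; rewrite eqxx /RD -/A => ->; rewrite -addnA.
have ZA : Z \subset A.
  apply/subsetP => i; rewrite !inE => /bigcapP; apply; done.
have fk k : k \in Ls -> exists i a, [/\ T j :\: T k = [set (i, j)],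
    T k :\: T j = [set (a, k)], f k = i & j != k].
  rewrite inE => /and3P[jk /existsP[i /eqP h1] /existsP[a /eqP h2]].
  exists i, a; split => //.
  rewrite /f; case: pickP => [i' | none] /=.
    by rewrite h1 inE => /eqP[].
  by have := none i; rewrite h1 set11.
have finj : {in Ls &, injective f}.
  move=> k k' kL k'L eqf.
  have [i [a [h1 h2 fi _]]] := fk k kL.
  have [i' [b [h3 h4 fi' _]]] := fk k' k'L.
  have ii : i' = i by rewrite -fi -fi' eqf.
  rewrite ii in h3.
  have [cj aj] := sp j.
  exact: (I_inj cj aj (sp k).1 (sp k').1 (cp j k) (cp j k') (cp k k') h1 h2 h3 h4).
have img : f @: Ls = A :\: Z.
  apply/setP => i; apply/imsetP/idP.
    move=> [k kL ->]; have [i' [a [h1 h2 fi _]]] := fk k kL.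
    have : (i', j) \in T j :\: T k by rewrite h1 set11.
    rewrite inE fi => /andP[nk ij].
    rewrite !inE ij andbT; apply/bigcapP => /(_ k isT); exact/negP.
  rewrite !inE => /andP[niZ iA].
  have nleaf : ~~ incident_to_leaf (T j) (i, j).
    rewrite /incident_to_leaf /= degR RDk eqxx addn1 eqSS addn1 orbF.
    apply/negP => deg1.
    case/negP: niZ; apply/bigcapP => k _.
    apply: (L_leaf (sp j).1 (sp k).1 (cp j k) iA (degL1 deg1 iA)).
      by move=> y yj; rewrite !RDk eq_sym (negbTE yj) /=; lia.
    by rewrite !RDk eqxx; case: (k == j) => /=; lia.
  have [G' [e' [G'G G'j e'G eqD]]] := link _ _ (TG j) iA nleaf.
  case: e' e'G eqD => a k e'G eqD.
  have G'eq : G' = (a, k) |: (T j :\ (i, j)) by rewrite eqD setD1K.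
  have ne : (a, k) != (i, j).
    apply: contraNneq G'j => h; rewrite G'eq h setD1K //.
  have akT : (a, k) \notin T j.
    apply/negP => akT.
    have : (a, k) \in T j :\ (i, j) by rewrite in_setD1 ne akT.
    by rewrite eqD setD11.
  have rdG y : RD G' y <= RD (T k) y.
    rewrite /RD G'eq; apply: leq_trans (NS_U1 _ _ _ _) _.
    have := NS_D1 y iA; rewrite -/(RD (T j) y) RDk -/(RD (T k) y) RDk => h.
    by case: (k == y) h; case: (j == y) => /=; lia.
  have spG := trees _ G'G.
  have G'k : G' = T k := U_eq (inl i0) spG.1 (comp _ _ G'G (TG k)) rdG.
  have jk : j != k by apply/eqP => ejk; move: G'j; rewrite G'k -ejk eqxx.
  have [d1 d2] := swap_diff iA akT.
  rewrite -G'eq G'k in d1 d2.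
  have kL : k \in Ls.
    rewrite inE /linked jk /=; apply/andP; split; apply/existsP.
      by exists i; rewrite d1.
    by exists a; rewrite d2.
  exists k => //.
  have [i' [a' [h1 _ fi _]]] := fk k kL.
  rewrite fi; move: h1; rewrite d1 => /setP/(_ (i, j)); rewrite !inE eqxx.
  by move/esym/eqP => [].
rewrite /augmented_degree -/Ls -/Z.
rewrite -(card_in_imset finj) img cardsD (setIidPr ZA) cardA subnK //.
by rewrite -cardA subset_leq_card.
Qed.
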